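(* Let $\underline M=(M,\lambda,\mu)$ be a free metabolic extended quadratic form over an abelian group $Q$ and $L\le M$ a lagrangian. Then there is an isomorphism $J:\underline M\to-\underline M$ with $J|_L=\mathrm{id}_L$.
   Context: Extended quadratic form over $Q$: $(M,\lambda,\mu)$, $\lambda$ symmetric bilinear to $\mathbb Z$, $\mu:M\to Q$ homomorphism; isomorphisms preserve $\lambda$ and $\mu$. $-\underline M=(M,-\lambda,-\mu)$. Free: $M$ free. Metabolic: $\mathrm{ad}\lambda:M\to\mathrm{Hom}(M,\mathbb Z)$ is an isomorphism (free case) and there is a lagrangian, i.e. a direct summand $L$ of half rank with $\lambda|_{L\times L}=0$ and $\mu|_L=0$. *)

(* Defs.v *)
(* A free (finitely generated) abelian group M of rank n is
   modelled as the Z-module 'rV[int]_n. *)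
From HB Require Import structures.
From mathcomp Require Import all_boot all_order all_algebra.
Set Implicit Arguments. Unset Strict Implicit. Unset Printing Implicit Defensive.
Import Order.TTheory GRing.Theory Num.Theory.
Local Open Scope ring_scope.

Notation FreeM n := 'rV[int]_n.

Definition is_hom (A B : zmodType) (f : A -> B) : Prop :=
  forall x y, f (x + y) = f x + f y.

Definition sym_bilinear n (lam : FreeM n -> FreeM n -> int) : Prop :=
  (forall x y, lam x y = lam y x) /\
  (forall x y z, lam (x + y) z = lam x z + lam y z).

Definition ext_quad_form (Q : zmodType) n
  (lam : FreeM n -> FreeM n -> int) (mu : FreeM n -> Q) : Prop :=
  sym_bilinear lam /\ is_hom mu.

(* ad lam : M -> Hom(M, Z) is an isomorphism: every homomorphism M -> Z
   is lam x (.) for exactly one x *)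
Definition ad_iso n (lam : FreeM n -> FreeM n -> int) : Prop :=
  forall f : FreeM n -> int, is_hom f ->
    exists x, (forall y, lam x y = f y) /\
      forall x', (forall y, lam x' y = f y) -> x' = x.

Definition subgroup n (L : FreeM n -> Prop) : Prop :=
  L 0 /\ forall x y, L x -> L y -> L (x - y).

Definition direct_summand n (L : FreeM n -> Prop) : Prop :=
  subgroup L /\
  exists K : FreeM n -> Prop, subgroup K /\
    (forall x, L x -> K x -> x = 0) /\
    (forall x, exists l k, L l /\ K k /\ x = l + k).

Definition has_rank n (L : FreeM n -> Prop) (k : nat) : Prop :=
  exists f : FreeM k -> FreeM n, is_hom f /\ injective f /\
    forall x, L x <-> exists y, x = f y.

Definition lagrangian (Q : zmodType) n
  (lam : FreeM n -> FreeM n -> int) (mu : FreeM n -> Q)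
  (L : FreeM n -> Prop) : Prop :=
  direct_summand L /\ (exists k, has_rank L k /\ (2 * k)%N = n) /\
  (forall x y, L x -> L y -> lam x y = 0) /\
  (forall x, L x -> mu x = 0).

Definition metabolic (Q : zmodType) n
  (lam : FreeM n -> FreeM n -> int) (mu : FreeM n -> Q) : Prop :=
  ad_iso lam /\ exists L, lagrangian lam mu L.

Definition iso_to_neg (Q : zmodType) n
  (lam : FreeM n -> FreeM n -> int) (mu : FreeM n -> Q)
  (J : FreeM n -> FreeM n) : Prop :=
  is_hom J /\ bijective J /\
  (forall x y, lam (J x) (J y) = - lam x y) /\
  (forall x, mu (J x) = - mu x).

(* Main.v *)
Require Import Defs.
From mathcomp Require Import all_boot all_order all_algebra.
From Stdlib Require Import ClassicalEpsilon.
From mathcomp Require Import ring zify.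
Set Implicit Arguments. Unset Strict Implicit. Unset Printing Implicit Defensive.
Import Order.TTheory GRing.Theory Num.Theory.
Local Open Scope ring_scope.

Section Hom.
Lemma hom0 (A B : zmodType) (g : A -> B) : is_hom g -> g 0 = 0.
Proof. move=> h; have := h 0 0; rewrite addr0 => H; apply: (addrI (g 0)); by rewrite -H addr0. Qed.

Lemma homN (A B : zmodType) (g : A -> B) : is_hom g -> forall x, g (- x) = - g x.
Proof. move=> h x; apply/eqP; rewrite -subr_eq0 opprK -h addNr (hom0 h) //. Qed.

Lemma homB (A B : zmodType) (g : A -> B) : is_hom g -> forall x y, g (x - y) = g x - g y.
Proof. by move=> h x y; rewrite h homN. Qed.

Lemma homMn (A B : zmodType) (g : A -> B) : is_hom g -> forall x m, g (x *+ m) = g x *+ m.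
Proof. move=> h x; elim=> [|m IH]; first by rewrite !mulr0n hom0. by rewrite !mulrS h IH. Qed.

Lemma homMz (A B : zmodType) (g : A -> B) : is_hom g -> forall x (z : int), g (x *~ z) = g x *~ z.
Proof. move=> h x [m|m]; first by rewrite -!pmulrn homMn.
by rewrite !NegzE !mulrNz homN // -!pmulrn homMn. Qed.

Lemma hom_sum n (B : zmodType) (g : 'rV[int]_n -> B) : is_hom g ->
  forall x, g x = \sum_j g (delta_mx 0 j) *~ x 0 j.
Proof.
move=> h x; rewrite {1}(matrix_sum_delta x) big_ord1.
rewrite (big_morph g h (hom0 h)); apply: eq_bigr => j _.
by rewrite -{1}(intz (x 0 j)) scaler_int homMz // ord1.
Qed.

Lemma hom_sumz n (g : 'rV[int]_n -> int) : is_hom g ->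
  forall x, g x = \sum_j x 0 j * g (delta_mx 0 j).
Proof. move=> h x; rewrite (hom_sum h); apply: eq_bigr => j _; by rewrite -mulrzr intz mulrC. Qed.

Lemma hom_mx n m (f : 'rV[int]_n -> 'rV[int]_m) : is_hom f ->
  forall x, f x = x *m \matrix_(j < n) f (delta_mx 0 j).
Proof.
move=> h x; apply/rowP => c; rewrite !mxE.
have hg : is_hom (fun y => f y 0 c) by move=> y z; rewrite h mxE.
rewrite (hom_sumz hg x); apply: eq_bigr => j _; by rewrite !mxE.
Qed.

Lemma clear_den m (q : 'rV[rat]_m) : exists d : int, d != 0 /\
  exists p : 'rV[int]_m, map_mx intr p = d%:~R *: q.
Proof.
exists (\prod_j denq (q 0 j)); split.
  by apply/prodf_neq0 => j _; rewrite denq_neq0.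
exists (\row_j ((\prod_(i | i != j) denq (q 0 i)) * numq (q 0 j))).
apply/rowP => j; rewrite !mxE [X in _ = X%:~R * _](bigD1 j) //= !intrM numqE.
ring.
Qed.
End Hom.

Lemma subg_add n (K : 'rV[int]_n -> Prop) : subgroup K -> forall x y, K x -> K y -> K (x + y).
Proof. move=> [K0 KB] x y Kx Ky; have := KB x (0 - y) Kx (KB _ _ K0 Ky); by rewrite sub0r opprK. Qed.

Lemma subg_opp n (K : 'rV[int]_n -> Prop) : subgroup K -> forall x, K x -> K (- x).
Proof. move=> [K0 KB] x Kx; have := KB _ _ K0 Kx; by rewrite sub0r. Qed.

Lemma subg_mulz n (K : 'rV[int]_n -> Prop) : subgroup K -> forall x (z : int), K x -> K (x *~ z).
Proof.
move=> hK x z Kx.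
have hn : forall m, K (x *+ m).
  elim=> [|m IH]; first by rewrite mulr0n; case: hK.
  by rewrite mulrS; apply: subg_add.
case: z => m; first by rewrite -pmulrn.
by rewrite NegzE mulrNz -pmulrn; apply: subg_opp.
Qed.

Lemma map_intr_inj m k (A B : 'M[int]_(m,k)) :
  map_mx (intr : int -> rat) A = map_mx intr B -> A = B.
Proof. move/matrixP => H; apply/matrixP => i j; have := H i j; rewrite !mxE; exact: intr_inj. Qed.

Lemma perp_sub n k (lam : 'rV[int]_n -> 'rV[int]_n -> int) (f : 'rV[int]_k -> 'rV[int]_n)
  (L K : 'rV[int]_n -> Prop) :
  sym_bilinear lam -> ad_iso lam -> is_hom f -> injective f ->
  (forall x, L x <-> exists y, x = f y) ->
  (forall x y, L x -> L y -> lam x y = 0) ->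
  subgroup K -> (forall x, L x -> K x -> x = 0) ->
  (forall x, exists l kk, L l /\ K kk /\ x = l + kk) -> (2 * k)%N = n ->
  forall a, (forall l, L l -> lam a l = 0) -> L a.
Proof.
move=> [lsym ladd] had hf finj hL hLL hK hLK hdec hkn a ha.
have Lf : forall y, L (f y) by move=> y; apply/hL; exists y.
pose F := \matrix_(j < k) f (delta_mx 0 j).
have hfF : forall y, f y = y *m F := hom_mx hf.
have lhom : forall w, is_hom (fun x => lam x w) by move=> w x y; apply: ladd.
pose A : 'M[rat]_(n,k) := \matrix_(j,i) (lam (delta_mx 0 j) (f (delta_mx 0 i)))%:~R.
have hA : forall x, map_mx intr x *m A = map_mx intr (\row_i lam x (f (delta_mx 0 i))).
  move=> x; apply/rowP => i; rewrite !mxE (hom_sumz (lhom _) x) rmorph_sum.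
  by apply: eq_bigr => j _; rewrite !mxE rmorphM.
pose Fq := map_mx (intr : int -> rat) F.
have h2 : (Fq <= kermx A)%MS.
  apply/sub_kermxP; apply/row_matrixP => r; rewrite row_mul row0.
  have -> : row r Fq = map_mx intr (f (delta_mx 0 r)) by apply/rowP=> c; rewrite !mxE.
  by rewrite hA; apply/rowP => i; rewrite !mxE hLL.
have hd' : forall x, exists y, K (x - f y).
  move=> x; have [l [kk [Ll [Kk ->]]]] := hdec x.
  have [y ->] := (hL l).1 Ll; exists y; by rewrite addrC addKr.
pose c x := proj1_sig (constructive_indefinite_description _ (hd' x)).
have hc : forall x, K (x - f (c x)) by move=> x; rewrite /c; case: constructive_indefinite_description.
have cuniq : forall x y, K (x - f y) -> c x = y.
  move=> x y Ky; apply: finj; apply/eqP; rewrite -subr_eq0; apply/eqP.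
  rewrite -(homB hf); apply: hLK; first exact: Lf.
  rewrite (homB hf); have := subg_add hK (subg_opp hK (hc x)) Ky.
  by rewrite opprB addrA subrK.
have chom : is_hom c.
  move=> x y; apply: cuniq; rewrite hf.
  have := subg_add hK (hc x) (hc y).
  by rewrite opprD addrACA.
have h1 : row_full A.
  rewrite -sub1mx; apply/row_subP => i; rewrite row1.
  have gh : is_hom (fun x => c x 0 i) by move=> x y; rewrite chom mxE.
  have [x0 [hx0 _]] := had _ gh.
  have -> : delta_mx 0 i = map_mx intr x0 *m A.
    rewrite hA; apply/rowP => j; rewrite !mxE hx0.
    have -> : c (f (delta_mx 0 j)) = delta_mx 0 j.
      by apply: cuniq; rewrite subrr; case: hK.
    by rewrite !mxE eqxx /= eq_sym; case: (i == j).
  exact: submxMl.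
have hrA : \rank A = k by apply/eqP.
have hker : \rank (kermx A) = k by rewrite mxrank_ker hrA -hkn mul2n -addnn addnK.
have hinj : forall q : 'rV[rat]_k, q *m Fq = 0 -> q = 0.
  move=> q hq; have [d [hd [p hp]]] := clear_den q.
  have hp0 : p *m F = 0.
    apply: map_intr_inj; by rewrite map_mxM hp -scalemxAl hq scaler0 map_mx0.
  have : f p = f 0 by rewrite hfF hp0 (hom0 hf).
  move/finj => p0; move: hp; rewrite p0 map_mx0 => /esym /eqP.
  by rewrite scaler_eq0 intr_eq0 (negbTE hd) /= => /eqP.
have hrF : \rank Fq = k.
  apply/eqP; change (row_free Fq); rewrite -kermx_eq0; apply/eqP/row_matrixP => r; rewrite row0.
  by apply: hinj; rewrite -row_mul mulmx_ker row0.
have h3 : (kermx A <= Fq)%MS.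
  have H := mxrank_leqif_sup h2; by rewrite -H.2 hrF hker.
have ha0 : map_mx intr a *m A = 0.
  by rewrite hA; apply/rowP => i; rewrite !mxE ha.
have : (map_mx intr a <= Fq)%MS by apply: submx_trans h3; apply/sub_kermxP.
case/submxP => q hq.
have [d [hd [p hp]]] := clear_den q.
have hpa : f p = d *: a.
  apply: map_intr_inj; by rewrite hfF map_mxM hp -scalemxAl -hq map_mxZ.
have [l [kk [Ll [Kk Ea]]]] := hdec a.
have [y Ey] := (hL l).1 Ll.
suff kk0 : kk = 0 by rewrite Ea kk0 addr0.
have Kd : K (d *: kk) by rewrite -[d in d *: _]intz scaler_int; apply: subg_mulz.
have Ld : L (d *: kk).
  apply/hL; exists (p - y *~ d); rewrite (homB hf) (homMz hf) hpa Ea Ey.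
  by rewrite -[d]intz !scaler_int mulrzDl intz addrAC subrr add0r.
have := hLK _ Ld Kd => /rowP H; apply/rowP => j; have := H j; rewrite !mxE => /eqP.
by rewrite mulf_eq0 (negbTE hd) /= => /eqP.
Qed.

Lemma zmod_swap (V : zmodType) (a b c d e f : V) :
  a + b - (c + d) + (e + f) = (a - c + e) + (b - d + f).
Proof. by rewrite opprD [X in X + _]addrACA (addrACA (a - c) (b - d)). Qed.

Theorem mainTheorem9 (Q : zmodType) (n : nat)
  (lam : 'rV[int]_n -> 'rV[int]_n -> int) (mu : 'rV[int]_n -> Q)
  (L : 'rV[int]_n -> Prop) :
  ext_quad_form lam mu -> metabolic lam mu -> lagrangian lam mu L ->
  exists J : 'rV[int]_n -> 'rV[int]_n,
    iso_to_neg lam mu J /\ (forall x, L x -> J x = x).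
Proof.
move=> [[lsym ladd] muhom] [had _]
  [[hLs [K [hK [hLK hdec]]]] [[k [[f [hf [finj hLf]]] hkn]] [hLL hLmu]]].
have lhomr : forall u, is_hom (lam u) by move=> u x y; rewrite lsym ladd lsym (lsym y).
have lhoml : forall w, is_hom (fun x => lam x w) by move=> w x y; apply: ladd.
have lamDl : forall x y z, lam (x + y) z = lam x z + lam y z := ladd.
have lamDr : forall x y z, lam z (x + y) = lam z x + lam z y by move=> *; apply: lhomr.
have lamNl : forall x z, lam (- x) z = - lam x z by move=> x z; apply: (homN (lhoml z)).
have lamNr : forall x z, lam z (- x) = - lam z x by move=> x z; apply: (homN (lhomr z)).
have Ladd := subg_add hLs; have Lopp := subg_opp hLs.
have Kadd := subg_add hK; have Kopp := subg_opp hK.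
have L0 : L 0 by case: hLs.
have K0 : K 0 by case: hK.
have hd' : forall x, exists l, L l /\ K (x - l).
  move=> x; have [l [kk [Ll [Kk ->]]]] := hdec x; exists l; by rewrite addrC addKr.
pose pL x := proj1_sig (constructive_indefinite_description _ (hd' x)).
have hpL : forall x, L (pL x) /\ K (x - pL x).
  by move=> x; rewrite /pL; case: constructive_indefinite_description.
have pLu : forall x l, L l -> K (x - l) -> pL x = l.
  move=> x l Ll Kl; apply/eqP; rewrite -subr_eq0; apply/eqP.
  have [L1 K1] := hpL x; apply: hLK; first by apply: hLs.2.
  have := hK.2 _ _ Kl K1; by rewrite opprB addrC addrA subrK.
have pdec : forall l kk, L l -> K kk -> pL (l + kk) = l.
  by move=> l kk Ll Kk; apply: pLu => //; rewrite addrC addKr.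
pose pK x := x - pL x.
have pKdec : forall l kk, L l -> K kk -> pK (l + kk) = kk.
  by move=> l kk Ll Kk; rewrite /pK pdec // addrC addKr.
have pKhom : is_hom pK.
  move=> x y; have [lx [kx [Lx [Kx ->]]]] := hdec x; have [ly [ky [Ly [Ky ->]]]] := hdec y.
  by rewrite addrACA !pKdec //; [apply: Ladd | apply: Kadd].
have gh : forall u, is_hom (fun y => lam u (pK y)) by move=> u x y; rewrite pKhom lamDr.
have hAm' : forall u, exists x, (forall y, lam x y = lam u (pK y)) /\
    forall x', (forall y, lam x' y = lam u (pK y)) -> x' = x by move=> u; apply: had.
pose Am u := proj1_sig (constructive_indefinite_description _ (hAm' u)).
have hAm : forall u, (forall y, lam (Am u) y = lam u (pK y)) /\
    forall x', (forall y, lam x' y = lam u (pK y)) -> x' = Am u.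
  by move=> u; rewrite /Am; case: constructive_indefinite_description.
have Amhom : is_hom Am.
  move=> u v; apply/esym; apply: (hAm (u + v)).2 => y.
  by rewrite lamDl !(hAm _).1 lamDl.
have AmN := homN Amhom.
have LAm : forall u, L (Am u).
  move=> u; apply: (perp_sub (conj lsym ladd) had hf finj hLf hLL hK hLK hdec hkn).
  move=> l Ll; rewrite (hAm u).1.
  have -> : pK l = 0 by rewrite -[l]addr0 pKdec.
  exact: (hom0 (lhomr u)).
have Kdl : forall kk, K kk -> pK kk = kk by move=> kk Kk; rewrite -[kk]add0r pKdec // add0r.
pose J x := pL x - pK x + Am (pK x).
have Jdec : forall l kk, L l -> K kk -> J (l + kk) = l - kk + Am kk.
  by move=> l kk Ll Kk; rewrite /J pdec // pKdec.
have JJ : forall x, J (J x) = x.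
  move=> x; have [lx [kx [Lx [Kx ->]]]] := hdec x.
  rewrite Jdec // addrAC Jdec; last by apply: Kopp.
    by rewrite opprK AmN addrAC addrK.
  by apply: Ladd.
exists J; split; last first.
  by move=> x Lx; rewrite -[x]addr0 Jdec // subr0 (hom0 Amhom) addr0.
split.
  move=> x y; have [lx [kx [Lx [Kx ->]]]] := hdec x; have [ly [ky [Ly [Ky ->]]]] := hdec y.
  by rewrite addrACA !Jdec //; [rewrite Amhom zmod_swap | apply: Ladd | apply: Kadd].
split; first by exists J.
split.
  move=> x y; have [lx [kx [Lx [Kx ->]]]] := hdec x; have [ly [ky [Ly [Ky ->]]]] := hdec y.
  rewrite !Jdec //.
  have e1 := hLL _ _ Lx Ly.
  have e2 := hLL _ _ Lx (LAm ky).
  have e3 := hLL _ _ (LAm kx) Ly.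
  have e4 := hLL _ _ (LAm kx) (LAm ky).
  have e5 : lam (Am kx) ky = lam kx ky by rewrite (hAm kx).1 Kdl.
  have e6 : lam kx (Am ky) = lam kx ky by rewrite lsym (hAm ky).1 Kdl // lsym.
  rewrite !(lamDl, lamDr, lamNl, lamNr) e1 e2 e3 e4 e5 e6.
  lia.
move=> x; have [lx [kx [Lx [Kx ->]]]] := hdec x.
by rewrite Jdec // muhom (homB muhom) (hLmu _ Lx) (hLmu _ (LAm kx)) muhom (hLmu _ Lx) sub0r add0r addr0.
Qed.
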